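(* Let $X,Y$ be Banach spaces, let $F:X\rightrightarrows Y$ be a closed convex set-valued mapping, let $A\subset X$ be a closed convex set, let $\bar y\in Y$, put $S:=F^{-1}(\bar y)\cap A$, and let $\bar x\in S$. Then $$\frac{1}{{\rm ssubreg}_AF(\bar x,\bar y)}=\sup\{\eta>0:\ DF^{-1}(\bar y,\bar x)(\eta_1B_Y)\cap(T(A,\bar x)+\eta_2B_X)\subset B_X\ \text{for all }\eta_1,\eta_2\ge0\text{ with }\eta_1+\eta_2<\eta\}.$$
   Context: $B_X,B_Y$ are the closed unit balls; $B(x,\delta)$ is the open ball. $F$ closed convex means ${\rm gph}(F)=\{(x,y):y\in F(x)\}$ is closed and convex in $X\times Y$. For a closed convex set $C$ and $a\in C$, the contingent cone $T(C,a)$ is the set of $v$ for which there exist $v_n\to v$, $t_n\to0^+$ with $a+t_nv_n\in C$ for all $n$. For $(x,y)\in{\rm gph}(F)$, $DF^{-1}(y,x)(v):=\{u\in X:(u,v)\in T({\rm gph}(F),(x,y))\}$ and $DF^{-1}(y,x)(W)=\bigcup_{v\in W}DF^{-1}(y,x)(v)$ for $W\subset Y$. The modulus of strong metric subregularity is ${\rm ssubreg}_AF(\bar x,\bar y):=\inf\{\tau>0:\exists\delta>0$ such that $\|x-\bar x\|\le\tau(d(\bar y,F(x))+d(x,A))$ for all $x\in B(\bar x,\delta)\}$, with $\inf\emptyset=+\infty$, $\sup\emptyset=0$, $1/(+\infty)=0$, $1/0=+\infty$. *)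

(* Defs.v *)
From mathcomp Require Import all_boot all_algebra.
From mathcomp Require Import all_classical all_reals all_analysis.
Import GRing.Theory Num.Theory.
Import numFieldNormedType.Exports.
Local Open Scope ring_scope.
Local Open Scope classical_set_scope.

Set Implicit Arguments. Unset Strict Implicit. Unset Printing Implicit Defensive.

Definition gph {X Y : Type} (F : X -> set Y) : set (X * Y) :=
  [set p | F p.1 p.2].

Definition closed_convex_map {R : realType} {X Y : normedModType R}
  (F : X -> set Y) : Prop := closed (gph F) /\ convex_set (gph F : set (X * Y)).

Definition cball1 {R : realType} {V : normedModType R} : set V :=
  [set x | `|x| <= 1].

Definition scale_set {R : realType} {V : lmodType R} (eta : R) (W : set V) : set V :=
  [set eta *: w | w in W].

Definition sum_set {R : realType} {V : lmodType R} (U W : set V) : set V :=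
  [set u + w | u in U & w in W].

Definition contingent_cone {R : realType} {V : normedModType R} (C : set V) (a : V)
  : set V :=
  [set v | exists (vn : nat -> V) (tn : nat -> R),
     vn @ \oo --> v /\ tn @ \oo --> 0 /\ (forall n, 0 < tn n) /\
     (forall n, C (a + tn n *: vn n))].

Definition coderiv_inv {R : realType} {X Y : normedModType R}
  (F : X -> set Y) (y : Y) (x : X) (v : Y) : set X :=
  [set u | contingent_cone (gph F) (x, y) (u, v)].

Definition coderiv_inv_set {R : realType} {X Y : normedModType R}
  (F : X -> set Y) (y : Y) (x : X) (W : set Y) : set X :=
  \bigcup_(v in W) coderiv_inv F y x v.

(* distance d(x,S) = inf {||x - s|| : s in S}, in \bar R (inf of empty = +oo) *)
Definition edist {R : realType} {V : normedModType R} (x : V) (S : set V) : \bar R :=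
  ereal_inf [set (`|x - s|)%:E | s in S].

(* modulus of strong metric subregularity relative to A; inf of empty = +oo *)
Definition ssubreg {R : realType} {X Y : normedModType R}
  (A : set X) (F : X -> set Y) (xb : X) (yb : Y) : \bar R :=
  ereal_inf [set tau%:E | tau in
    [set tau : R | 0 < tau /\ exists delta : R, 0 < delta /\
       forall x : X, `|x - xb| < delta ->
         ((`|x - xb|)%:E <= tau%:E * (edist yb (F x) + edist x A))%E]].

Definition einv_conv {R : realType} (x : \bar R) : \bar R :=
  if x == +oo%E then 0%E else if x == 0%E then +oo%E else (1 / fine x)%:E.

Definition sup_conv {R : realType} (S : set \bar R) : \bar R :=
  if S == set0 then 0%E else ereal_sup S.

(* Main.v *)
Require Import Defs.
From mathcomp Require Import all_boot all_order all_algebra.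
From mathcomp Require Import all_classical all_reals all_analysis.
From mathcomp Require Import ring lra.
Import Order.TTheory GRing.Theory Num.Theory.
Import numFieldNormedType.Exports.
Local Open Scope ring_scope.
Local Open Scope classical_set_scope.

Lemma abstract_eq (R : realType) (T E : set R) :
  (forall t, T t -> 0 < t) -> (forall e, E e -> 0 < e) ->
  (forall t, T t -> E t^-1) -> (forall e t, E e -> e^-1 < t -> T t) ->
  einv_conv (ereal_inf [set t%:E | t in T]) = sup_conv [set e%:E | e in E].
Proof.
move=> Tp Ep hA hB.
have [[t0 Tt0]|T0] := pselect (exists t, T t); last first.
  have E0 : forall e, ~ E e.
    move=> e Ee; apply: T0; exists (e^-1 + 1); apply: hB Ee _.
    by rewrite ltrDl.
  have -> : [set t%:E | t in T] = set0.
    by apply/seteqP; split => // x [t Tt _]; apply: T0; exists t.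
  have -> : [set e%:E | e in E] = set0.
    by apply/seteqP; split => // x [e Ee _]; case: (E0 e).
  by rewrite ereal_inf0 /einv_conv /sup_conv eqxx eqxx.
have Ene : [set e%:E | e in E] != set0.
  by apply/set0P; exists (t0^-1)%:E; exists t0^-1 => //; exact: hA.
rewrite /sup_conv (negbTE Ene).
set m := ereal_inf _; set s := ereal_sup _.
have m0 : (0 <= m)%E.
  by apply: le_ereal_inf_tmp => _ [t Tt <-]; rewrite lee_fin ltW // Tp.
have mt0 : (m <= t0%:E)%E by apply: ereal_inf_lbound; exists t0.
have [r mr] : exists r, m = r%:E.
  by move: m0 mt0; case: m => [r _ _|//|//]; exists r.
have r0 : 0 <= r by rewrite -lee_fin -mr.
have L1 : forall t, T t -> ((t^-1)%:E <= s)%E.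
  by move=> t Tt; apply: ereal_sup_ubound; exists t^-1 => //; exact: hA.
have L2 : forall e, E e -> r <= e^-1.
  move=> e Ee; apply/ler_addgt0Pr => eps eps0; rewrite -lee_fin -mr.
  apply: ereal_inf_lbound; exists (e^-1 + eps) => //.
  by apply: hB Ee _; rewrite ltrDl.
have sfin : s = +oo%E \/ exists s', s = s'%:E /\ 0 < s' /\ s'^-1 <= r.
  have := L1 _ Tt0; case Hs: s => [s'||] st0; last 2 first.
  - by left.
  - by move: st0; rewrite leeNy_eq.
  right.
  have s'0 : 0 < s' by rewrite -lte_fin; apply: lt_le_trans st0; rewrite lte_fin invr_gt0 Tp.
  exists s'; split => //; split => //.
  rewrite -lee_fin -mr; apply: le_ereal_inf_tmp => _ [t Tt <-].
  have tp := Tp _ Tt; rewrite lee_fin -(invrK t) lef_pV2 ?posrE ?invr_gt0 //.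
  by rewrite -lee_fin -Hs; exact: L1 _ Tt.
rewrite [m]mr /einv_conv.
have [r0e|rn0] := eqVneq r 0.
  rewrite r0e eqxx /=.
  case: sfin => [//|[s' [_ [s'0 sr]]]].
  by have := s'0; rewrite -invr_gt0 ltNge -r0e sr.
have -> : (r%:E == 0%E) = false by rewrite eqe (negbTE rn0).
rewrite /=.
have rp : 0 < r by rewrite lt_neqAle eq_sym rn0 r0.
apply/eqP; rewrite eq_le; apply/andP; split.
  case: sfin => [->|[s' [-> [s'0 sr]]]]; first exact: leey.
  rewrite lee_fin div1r -(invrK s') lef_pV2 ?posrE ?invr_gt0 //.
apply: ge_ereal_sup => _ [e Ee <-].
have ep := Ep _ Ee; rewrite lee_fin div1r -(invrK e) lef_pV2 ?posrE ?invr_gt0 //.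
exact: L2.
Qed.
Lemma convex_seg (R : realType) (V : lmodType R) (C : set V) (a w : V) (s t : R) :
  convex_set (C : set (convex_lmodType V)) -> C a -> C (a + s *: w) -> 0 < t -> t <= s -> C (a + t *: w).
Proof.
move=> cC Ca Cs t0 ts.
have s0 : 0 < s by apply: lt_le_trans ts.
have p0 : 0 <= t / s by rewrite divr_ge0 // ltW.
have p1 : t / s <= 1 by rewrite ler_pdivrMr // mul1r.
have := cC (a + s *: w) a (Itv01 p0 p1).
rewrite !inE => /(_ Cs Ca).
rewrite /conv /=.
suff -> : (t / s) *: (a + s *: w) + unstable.onem (t / s) *: a = a + t *: w by [].
rewrite /unstable.onem scalerDr scalerA divfK ?gt_eqF // scalerBl scale1r.
by rewrite addrC addrA subrK.
Qed.

Lemma cone_T (R : realType) (V : normedModType R) (C : set V) (a c : V) (t : R) :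
  convex_set (C : set (convex_lmodType V)) -> C a -> C c -> 0 < t ->
  contingent_cone C a (t^-1 *: (c - a)).
Proof.
move=> cC Ca Cc t0.
exists (fun _ => t^-1 *: (c - a)), (fun n => t * harmonic n).
split; first exact: cvg_cst.
split.
  have := @cvgMl_tmp _ _ _ _ _ t _ (@cvg_harmonic R). rewrite mulr0; apply; exact: eventually_filter.
split; first by move=> n; rewrite mulr_gt0 // harmonic_gt0.
move=> n; apply: (@convex_seg _ _ _ _ _ t) => //.
- by rewrite scalerA mulfV ?gt_eqF // scale1r addrC subrK.
- by rewrite mulr_gt0 // harmonic_gt0.
- apply: ler_piMr; first exact: ltW.
  by rewrite /harmonic /= invf_le1 // ler1n.
Qed.

Lemma scale_mem (R : realType) (V : normedModType R) (e : R) (z : V) :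
  0 < e -> `|z| <= e -> scale_set e cball1 z.
Proof.
move=> e0 ze; exists (e^-1 *: z); last by rewrite scalerA mulfV ?gt_eqF // scale1r.
have e0' : 0 <= e^-1 by rewrite invr_ge0 ltW.
rewrite /cball1 /= normrZ ger0_norm //.
by rewrite ler_pdivrMl // mulr1.
Qed.

Lemma edist_ge0 (R : realType) (V : normedModType R) (x : V) (S : set V) :
  (0 <= Defs.edist x S)%E.
Proof. by apply: le_ereal_inf_tmp => _ [s _ <-]; rewrite lee_fin. Qed.

Lemma edist_le (R : realType) (V : normedModType R) (x s : V) (S : set V) :
  S s -> (Defs.edist x S <= (`|x - s|)%:E)%E.
Proof. by move=> Ss; apply: ereal_inf_lbound; exists s. Qed.

Lemma edist_lt (R : realType) (V : normedModType R) (x : V) (S : set V) (r : R) :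
  (Defs.edist x S < r%:E)%E -> exists2 s, S s & `|x - s| < r.
Proof.
by move=> /ereal_inf_lt [_ [s Ss <-]]; rewrite lte_fin => h; exists s.
Qed.

Arguments edist_ge0 {R V}.
Arguments edist_le {R V}.
Arguments edist_lt {R V}.
Arguments scale_mem {R V}.
Arguments cone_T {R V C a c t}.
Arguments convex_seg {R V C a w s t}.

Lemma cvg_fst_seq (R : realType) (X Y : normedModType R) (pn : nat -> X * Y) (z : X) (v : Y) :
  pn @ \oo --> (z, v) -> (fun m => (pn m).1) @ \oo --> z.
Proof. move=> h; apply: cvg_comp h _; exact: cvg_fst. Qed.
Lemma cvg_snd_seq (R : realType) (X Y : normedModType R) (pn : nat -> X * Y) (z : X) (v : Y) :
  pn @ \oo --> (z, v) -> (fun m => (pn m).2) @ \oo --> v.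
Proof. move=> h; apply: cvg_comp h _; exact: cvg_snd. Qed.

Arguments cvg_fst_seq {R X Y pn z v}.
Arguments cvg_snd_seq {R X Y pn z v}.

Lemma coreA (R : realType) (X Y : normedModType R) (F : X -> set Y) (A : set X)
  (yb : Y) (xb : X) (tau delta : R) (z : X) (v : Y) (w : X) :
  convex_set (A : set (convex_lmodType X)) -> A xb -> 0 < tau -> 0 < delta ->
  (forall x : X, `|x - xb| < delta ->
     ((`|x - xb|)%:E <= tau%:E * (Defs.edist yb (F x) + Defs.edist x A))%E) ->
  contingent_cone (gph F) (xb, yb) (z, v) -> contingent_cone A xb w ->
  `|z| <= tau * (`|v| + `|z - w|).
Proof.
move=> cA Ab tau0 d0 hT [pn [tn [Hp [Ht [tp Gp]]]]] [wn [sn [Hw [Hs [sp As]]]]].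
apply/ler_addgt0Pr => e e0.
have h31 : 0 < 3 * tau + 1 by lra.
set eps := e / (3 * tau + 1).
have eps0 : 0 < eps by rewrite divr_gt0.
have [N hN] : exists N, `|w - wn N| < eps.
  by move: Hw => /cvgrPdist_lt /(_ eps eps0) [N _ hN]; exists N; exact: (hN N (leqnn N)).
have zp : 0 < `|z| + eps by exact: ltr_wpDl (normr_ge0 _) eps0.
have H1 : \forall m \near \oo, `|z - (pn m).1| < eps.
  by move: (cvg_fst_seq Hp) => /cvgrPdist_lt; apply.
have H2 : \forall m \near \oo, `|v - (pn m).2| < eps.
  by move: (cvg_snd_seq Hp) => /cvgrPdist_lt; apply.
have H3 : \forall m \near \oo, `|0 - tn m| < sn N.
  by move: Ht => /cvgrPdist_lt; apply.
have H4 : \forall m \near \oo, `|0 - tn m| < delta / (`|z| + eps).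
  by move: Ht => /cvgrPdist_lt; apply; exact: divr_gt0.
have [M _ hM] := filterI H1 (filterI H2 (filterI H3 H4)).
have [h1 [h2 [h3 h4]]] := hM M (leqnn M).
move: h1 h2 h3 h4 (Gp M) (tp M) => /=.
set u := (pn M).1; set v' := (pn M).2; set t := tn M.
rewrite !sub0r !normrN => h1 h2 h3 h4 GM t0.
rewrite gtr0_norm // in h3 h4.
set x := xb + t *: u.
have Gx : F x (yb + t *: v') by exact: GM.
have AwN : A (xb + t *: wn N) by exact: (convex_seg cA Ab (As N) t0 (ltW h3)).
have uz : `|u| <= `|z| + eps.
  have := ler_normD z (u - z); rewrite addrCA subrr addr0 => /le_trans; apply.
  by rewrite lerD2l distrC ltW.
have zu : `|z| <= `|u| + eps.
  have := ler_normD u (z - u); rewrite addrCA subrr addr0 => /le_trans; apply.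
  by rewrite lerD2l ltW.
have ex1 : x - xb = t *: u by rewrite /x addrC addKr.
have ex2 : yb - (yb + t *: v') = - (t *: v') by rewrite opprD addrA subrr add0r.
have ex3 : x - (xb + t *: wn N) = t *: (u - wn N).
  by rewrite /x opprD addrACA subrr add0r scalerBr.
have hx : `|x - xb| < delta.
  rewrite ex1 normrZ gtr0_norm //.
  apply: (le_lt_trans (y := t * (`|z| + eps))); first by rewrite ler_wpM2l // ltW.
  by rewrite -ltr_pdivlMr.
have := hT x hx.
move/le_trans => /(_ _ (lee_wpmul2l _ (leeD (edist_le yb _ _ Gx) (edist_le x _ _ AwN)))).
rewrite lee_fin ltW // -EFinD -EFinM lee_fin ex1 ex2 ex3 normrN !normrZ gtr0_norm //.
rewrite -mulrDr mulrCA ler_pM2l // => /(_ isT) key.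
have b : `|v'| <= `|v| + eps.
  have := ler_normD v (v' - v); rewrite addrCA subrr addr0 => /le_trans; apply.
  by rewrite lerD2l distrC ltW.
have c : `|u - wn N| <= `|z - w| + 2 * eps.
  have -> : u - wn N = (u - z) + ((z - w) + (w - wn N)).
    by rewrite [(z - w) + _]addrA subrK addrA subrK.
  apply: le_trans (ler_normD _ _) _.
  apply: le_trans (lerD (lexx _) (ler_normD _ _)) _.
  rewrite distrC; move: h1 hN; lra.
have key2 : `|u| <= tau * (`|v| + `|z - w|) + tau * (3 * eps).
  apply: le_trans key _; rewrite -mulrDr; apply: ler_wpM2l; [exact: ltW|]; move: b c; lra.
have ee : e = 3 * (tau * eps) + eps by rewrite /eps; field; rewrite gt_eqF.
move: key2 zu; rewrite ee; set P := tau * (_ + _); set q := tau * eps.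
have -> : tau * (3 * eps) = 3 * q by rewrite /q mulrCA.
lra.
Qed.

Lemma partB (R : realType) (X Y : normedModType R)
  (F : X -> set Y) (A : set X) (yb : Y) (xb : X) :
  convex_set (gph F : set (X * Y)) -> convex_set (A : set (convex_lmodType X)) ->
  F xb yb -> A xb -> forall eta tau : R,
  (0 < eta /\
       forall eta1 eta2 : R, 0 <= eta1 -> 0 <= eta2 -> eta1 + eta2 < eta ->
         coderiv_inv_set F yb xb (scale_set eta1 cball1)
           `&` sum_set (contingent_cone A xb) (scale_set eta2 cball1)
         `<=` cball1) -> eta^-1 < tau ->
  (0 < tau /\ exists delta : R, 0 < delta /\
       forall x : X, `|x - xb| < delta ->
         ((`|x - xb|)%:E <= tau%:E * (Defs.edist yb (F x) + Defs.edist x A))%E).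
Proof.
move=> cG cA Fb Ab eta tau [eta0 hE] etau.
have tau0 : 0 < tau by apply: lt_trans etau; rewrite invr_gt0.
split => //; exists 1; split => // x _.
have e1g := edist_ge0 yb (F x); have e2g := edist_ge0 x A.
case E1 : (Defs.edist yb (F x)) => [r1||]; last first.
- by move: e1g; rewrite E1.
- rewrite addye; last by move: e2g; case: (Defs.edist x A).
  by rewrite gt0_muley ?lte_fin // leey.
case E2 : (Defs.edist x A) => [r2||]; last first.
- by move: e2g; rewrite E2.
- by rewrite addey // gt0_muley ?lte_fin // leey.
rewrite -EFinD -EFinM lee_fin.
have r10 : 0 <= r1 by rewrite -lee_fin -E1.
have r20 : 0 <= r2 by rewrite -lee_fin -E2.
rewrite leNgt; apply/negP => hd.
set d := `|x - xb| in hd.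
set eps := (d - tau * (r1 + r2)) / (4 * tau).
have eps0 : 0 < eps by rewrite divr_gt0 ?subr_gt0 ?mulr_gt0.
have [y Fy hy] : exists2 y, F x y & `|yb - y| < r1 + eps.
  by apply: edist_lt; rewrite E1 lte_fin ltrDl.
have [a Aa ha] : exists2 a, A a & `|x - a| < r2 + eps.
  by apply: edist_lt; rewrite E2 lte_fin ltrDl.
set K := (r1 + eps) + (r2 + eps).
have K0 : 0 < K by rewrite addr_gt0 // ltr_wpDl.
have tK : tau * K < d.
  have e4 : 4 * (tau * eps) = d - tau * (r1 + r2).
    rewrite /eps; field; rewrite gt_eqF //.
  have -> : tau * K = tau * (r1 + r2) + 2 * (tau * eps) by rewrite /K; ring.
  move: e4 hd; set q := tau * eps; set z := tau * (r1 + r2); lra.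
have Keta : K / eta < d.
  apply: le_lt_trans tK; rewrite [K / eta]mulrC.
  by apply: ler_wpM2r; exact: ltW.
set t := (K / eta + d) / 2.
have Kt : K / eta < t by rewrite /t ltr_pdivlMr // mulr2n mulrDr mulr1 ltrD2l.
have td : t < d by rewrite /t ltr_pdivrMr // mulr2n mulrDr mulr1 ltrD2r.
have t0 : 0 < t by apply: le_lt_trans Kt; rewrite divr_ge0 ?ltW.
set u := t^-1 *: (x - xb).
have ti0 : 0 <= t^-1 by rewrite invr_ge0 ltW.
have p1 : 0 < r1 + eps by exact: ltr_wpDl r10 eps0.
have p2 : 0 < r2 + eps by exact: ltr_wpDl r20 eps0.
have : cball1 u.
  apply: (hE ((r1 + eps) / t) ((r2 + eps) / t)).
  - exact: divr_ge0 (addr_ge0 r10 (ltW eps0)) (ltW t0).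
  - exact: divr_ge0 (addr_ge0 r20 (ltW eps0)) (ltW t0).
  - by rewrite -mulrDl -/K ltr_pdivrMr // mulrC -ltr_pdivrMr.
  rewrite /setI /=; split.
  + exists (t^-1 *: (y - yb)).
      apply: scale_mem; first by rewrite divr_gt0.
      rewrite normrZ (ger0_norm ti0) mulrC; apply: ler_wpM2r => //.
      by rewrite distrC; exact: ltW.
    have := cone_T cG (c := (x, y)) _ _ t0.
    by apply.
  + exists (t^-1 *: (a - xb)); first exact: cone_T.
    exists (t^-1 *: (x - a)).
      apply: scale_mem; first by rewrite divr_gt0.
      rewrite normrZ (ger0_norm ti0) mulrC; apply: ler_wpM2r => //.
      exact: ltW.
    by rewrite /u -scalerDr addrC addrA subrK.
rewrite /cball1 /= /u normrZ (ger0_norm ti0) -/d.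
by rewrite ler_pdivrMl // mulr1 leNgt td.
Qed.

Lemma partA (R : realType) (X Y : normedModType R)
  (F : X -> set Y) (A : set X) (yb : Y) (xb : X) :
  convex_set (A : set (convex_lmodType X)) -> A xb -> forall tau : R,
  (0 < tau /\ exists delta : R, 0 < delta /\
       forall x : X, `|x - xb| < delta ->
         ((`|x - xb|)%:E <= tau%:E * (Defs.edist yb (F x) + Defs.edist x A))%E) ->
  (0 < tau^-1 /\
       forall eta1 eta2 : R, 0 <= eta1 -> 0 <= eta2 -> eta1 + eta2 < tau^-1 ->
         coderiv_inv_set F yb xb (scale_set eta1 cball1)
           `&` sum_set (contingent_cone A xb) (scale_set eta2 cball1)
         `<=` cball1).
Proof.
move=> cA Ab tau [tau0 [delta [d0 hT]]]; split; first by rewrite invr_gt0.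
move=> eta1 eta2 h1 h2 hs z [[v [b b1 <-] Hz] [w Tw [c [b' b'1 <-] wz]]].
have := @coreA _ _ _ _ _ _ _ _ _ _ _ _ cA Ab tau0 d0 hT Hz Tw.
have -> : z - w = eta2 *: b' by rewrite -wz addrC addKr.
rewrite !normrZ (ger0_norm h1) (ger0_norm h2) => hz.
rewrite /cball1 /=; apply: (le_trans hz).
have : eta1 * `|b| + eta2 * `|b'| <= eta1 + eta2.
  by apply: lerD; apply: ler_piMr.
move=> h; apply: le_trans (ler_wpM2l (ltW tau0) h) _.
rewrite -(@mulfV _ tau (lt0r_neq0 tau0)); apply: ler_wpM2l; first exact: ltW.
exact: ltW.
Qed.

Theorem theorem3p3 (R : realType) (X Y : completeNormedModType R)
  (F : X -> set Y) (A : set X) (yb : Y) (xb : X) :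
  closed_convex_map F -> closed A -> convex_set A ->
  (* xb ∈ S := F^{-1}(yb) ∩ A *)
  ([set x | F x yb] `&` A) xb ->
  einv_conv (ssubreg A F xb yb) =
  sup_conv [set eta%:E | eta in
    [set eta : R | 0 < eta /\
       forall eta1 eta2 : R, 0 <= eta1 -> 0 <= eta2 -> eta1 + eta2 < eta ->
         coderiv_inv_set F yb xb (scale_set eta1 cball1)
           `&` sum_set (contingent_cone A xb) (scale_set eta2 cball1)
         `<=` cball1]].
Proof.
move=> [_ cG] _ cA [Fb Ab].
rewrite /ssubreg.
apply: abstract_eq.
- by move=> t [].
- by move=> e [].
- by move=> t; exact: (@partA R X Y F A yb xb cA Ab t).
- by move=> e t; exact: (@partB R X Y F A yb xb cG cA Fb Ab e t).
Qed.
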